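(* Let $A$ and $B$ be rings, $f: A\to B$ a ring homomorphism and $J$ a proper ideal of $B$ such that $f^{-1}(J)\cap \mathrm{nil}(A)=(0)$. If $f(A)+J$ is an Armendariz ring, then $A\bowtie^{f}J$ is an Armendariz ring.
   Context: All rings are associative with identity (not necessarily commutative), ring homomorphisms are unital, and ideals are two-sided. $\mathrm{nil}(R)$ denotes the set of nilpotent elements of a ring $R$. For a ring homomorphism $f:A\to B$ and an ideal $J$ of $B$, the amalgamation is the subring $A\bowtie^{f}J=\{(a,f(a)+j)\mid a\in A,\ j\in J\}$ of $A\times B$; $f(A)+J=\{f(a)+j: a\in A, j\in J\}$ is a subring of $B$. A ring $R$ is Armendariz if whenever $p(x)=\sum_{i=0}^n a_ix^i$ and $q(x)=\sum_{j=0}^m b_jx^j$ in $R[x]$ satisfy $p(x)q(x)=0$, then $a_ib_j=0$ for all $i,j$. *)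

(* Defs.v *)
From HB Require Import structures.
From mathcomp Require Import all_boot all_order all_algebra.
Set Implicit Arguments. Unset Strict Implicit. Unset Printing Implicit Defensive.
Import GRing.Theory.
Local Open Scope ring_scope.

Definition armendariz (R : nzRingType) : Prop :=
  forall p q : {poly R}, p * q = 0 -> forall i j : nat, p`_i * q`_j = 0.

(* Armendariz property for a subring S of R (given as a predicate on R):
   this is literally the Armendariz property of the ring S, since
   polynomials over S are polynomials over R with coefficients in S and
   multiplication is computed in R. *)
Definition armendariz_sub {R : nzRingType} (S : R -> Prop) : Prop :=
  forall p q : {poly R}, (forall i, S p`_i) -> (forall i, S q`_i) ->
    p * q = 0 -> forall i j : nat, p`_i * q`_j = 0.

Definition is_nilpotent {R : nzRingType} (a : R) : Prop := exists n : nat, a ^+ n = 0.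

Definition is_ideal2s {R : nzRingType} (J : R -> Prop) : Prop :=
  [/\ J 0, (forall x y, J x -> J y -> J (x - y)),
      (forall r x, J x -> J (r * x)) & (forall r x, J x -> J (x * r))].

Definition proper_ideal2s {R : nzRingType} (J : R -> Prop) : Prop :=
  is_ideal2s J /\ ~ J 1.

Definition amalgamation {A B : nzRingType} (f : A -> B) (J : B -> Prop)
  : A * B -> Prop :=
  fun x => exists (a : A) (j : B), J j /\ x = (a, f a + j).

Definition img_plus {A B : nzRingType} (f : A -> B) (J : B -> Prop) : B -> Prop :=
  fun b => exists (a : A) (j : B), J j /\ b = f a + j.

(* Main.v *)
Require Import Defs.
From mathcomp Require Import all_boot all_order all_algebra.
Import GRing.Theory.
Local Open Scope ring_scope.
From HB Require Import structures.

Lemma key (R : nzRingType) (P : R -> Prop)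
 (Pl : forall r x, P x -> P (r*x)) (Pr : forall r x, P x -> P (x*r))
 (Pn : forall x n, P x -> x ^+ n = 0 -> x = 0)
 (p q : {poly R}) (hpq : p * q = 0) (hP : forall i j, P (p`_i * q`_j)) :
 forall i j, p`_i * q`_j = 0.
Proof.
have sq : forall u, P u -> u * u = 0 -> u = 0.
  by move=> u Pu uu; apply: (Pn u 2%N Pu); rewrite expr2.
have swap : forall y z, P y -> y * z = 0 -> z * y = 0.
  move=> y z Py yz; apply: sq; first exact: Pl.
  by rewrite mulrA -(mulrA z) yz mulr0 mul0r.
have swap' : forall y z, P y -> z * y = 0 -> y * z = 0.
  move=> y z Py yz; apply: sq; first exact: Pr.
  by rewrite mulrA -(mulrA y) yz mulr0 mul0r.
suff H : forall k s, (s <= k)%N -> p`_s * q`_(k - s) = 0.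
  by move=> i j; have := H (i + j)%N i (leq_addr _ _); rewrite addKn.
elim/ltn_ind => k IHk.
have IH : forall i j, (i + j < k)%N -> p`_i * q`_j = 0.
  by move=> i j lt; have := IHk _ lt i (leq_addr _ _); rewrite addKn.
elim/ltn_ind => s IHs sk.
set x := p`_s * q`_(k - s).
have Px : P x by exact: hP.
apply: (Pn x 5%N Px).
have E : \sum_(i < k.+1) x * x * (p`_i * q`_(k - i)) * (x * x) = 0.
  by rewrite -mulr_suml -mulr_sumr -coefM hpq coef0 mulr0 mul0r.
rewrite -E (bigD1 (Ordinal (sk : (s < k.+1)%N))) //= big1 ?addr0.
  by rewrite !exprS expr0 mulr1 !mulrA.
move=> [i lik] /= /negP nis.
have [ltis | ltsi] : (i < s)%N \/ (s < i)%N.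
  case: (ltngtP i s) => h; [by left | by right | by exfalso; apply nis; apply/eqP; apply: val_inj].
-
  set h := x * p`_i.
  have Ph : P h by exact: Pr.
  have hb : h * q`_(k - s) = 0.
    rewrite /h -mulrA IH ?mulr0 //.
    by rewrite addnC -ltn_subRL subKn //; apply: ltn_sub2l => //; apply: (leq_trans ltis).
  have bh := swap h _ Ph hb.
  have xh : x * h = 0 by rewrite /x -mulrA bh mulr0.
  have -> : x * x * (p`_i * q`_(k - i)) * (x * x) = x * h * q`_(k - i) * (x * x).
    by rewrite /h !mulrA.
  by rewrite xh !mul0r.
-
  set g := q`_(k - i) * x.
  have Pg : P g by exact: Pl.
  have ag : p`_s * g = 0.
    rewrite /g mulrA IH ?mul0r //.
    rewrite -ltn_subRL; apply: ltn_sub2l => //; apply: (leq_trans ltsi); exact: lik.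
  have ga := swap' g _ Pg ag.
  have gx : g * x = 0 by rewrite /x mulrA ga mul0r.
  have -> : x * x * (p`_i * q`_(k - i)) * (x * x) = x * x * p`_i * (g * x).
    by rewrite /g !mulrA.
  by rewrite gx mulr0.
Qed.

Theorem theorem2p2 (A B : nzRingType) (f : {rmorphism A -> B}) (J : B -> Prop)
  (hJ : proper_ideal2s J)
  (hnil : forall a : A, J (f a) -> is_nilpotent a -> a = 0)
  (harm : armendariz_sub (img_plus f J)) :
  armendariz_sub (amalgamation f J).
Proof.
case: hJ => [[J0 JB Jl Jr] _].
move=> p q hp hq hpq i j.
pose p1 := map_poly fst p; pose q1 := map_poly fst q.
pose p2 := map_poly snd p; pose q2 := map_poly snd q.
have h1 : p1 * q1 = 0 by rewrite /p1 /q1 -rmorphM hpq rmorph0.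
have h2 : p2 * q2 = 0 by rewrite /p2 /q2 -rmorphM hpq rmorph0.
have e2 : p2`_i * q2`_j = 0.
  apply: harm h2 i j => k; rewrite coef_map /=.
  - by have [a [jj [Jj ->]]] := hp k; exists a, jj.
  - by have [a [jj [Jj ->]]] := hq k; exists a, jj.
have e1 : p1`_i * q1`_j = 0.
  apply: (@key _ (fun x => f x = 0) _ _ _ p1 q1) => //.
  - by move=> r x /= fx; rewrite rmorphM /= fx mulr0.
  - by move=> r x /= fx; rewrite rmorphM /= fx mul0r.
  - by move=> x n /= fx xn; apply: hnil; [rewrite fx | exists n].
  - move=> i' j' /=; rewrite rmorphM /=.
    have hf : map_poly f p1 * map_poly f q1 = 0 by rewrite -rmorphM h1 rmorph0.
    have := harm _ _ _ _ hf i' j'; rewrite !coef_map; apply => k; rewrite coef_map /=.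
    + by exists (p1`_k), 0; rewrite addr0.
    + by exists (q1`_k), 0; rewrite addr0.
move: e1 e2; rewrite /p1 /q1 /p2 /q2 !coef_map /=.
by case: (p`_i) => a1 a2; case: (q`_j) => b1 b2 /= e1 e2; have -> : (a1, a2) * (b1, b2) = (a1 * b1, a2 * b2) by []; rewrite e1 e2.
Qed.
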